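(* Let $G$ be a finite, simple, connected graph of order $n\ge 3$. Then $res_{wt}(G)=n$ if and only if $G$ contains a twin (i.e. some vertex of $G$ is a twin).
   Context: $d(x,y)$ is the shortest-path distance and $N(x)$ the set of neighbors of $x$. A set $W\subseteq V(G)$ is a resolving set if for every two distinct vertices $y,z$ there is $x\in W$ with $d(y,x)\ne d(z,x)$. A set $W$ is a weak total resolving set (WTR-set) if $W$ is resolving and, for every $w\in W$ and every $x\in V(G)\setminus W$, there is $w'\in W\setminus\{w\}$ with $d(x,w')\ne d(w,w')$. The weak total resolving number $res_{wt}(G)$ is the minimum positive integer $r$ such that every set of $r$ vertices of $G$ is a WTR-set for $G$. Two distinct vertices $u,v$ are twins if $N(u)\setminus\{v\}=N(v)\setminus\{u\}$; a vertex $u$ is a twin if there exists $v\ne u$ such that $u,v$ are twins. *)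

(* Defs.v *)
From mathcomp Require Import all_boot.
Set Implicit Arguments. Unset Strict Implicit. Unset Printing Implicit Defensive.

Section Graph.
Variables (T : finType) (e : rel T).

Definition walk_len (k : nat) (x y : T) : bool :=
  [exists p : k.-tuple T, path e x p && (last x p == y)].

(* shortest-path distance d(x,y): least k with a walk of length k from x to y
   (a shortest walk is a path of length < #|T|); in a connected graph this
   is always found.  Unreachable pairs get #|T| (irrelevant here). *)
Definition dist (x y : T) : nat :=
  find (fun k => walk_len k x y) (iota 0 #|T|).

Definition nbhd (x : T) : {set T} := [set y | e x y].

Definition connected_graph : Prop := forall x y : T, connect e x y.

Definition resolving (W : {set T}) : bool :=
  [forall y, forall z, (y != z) ==> [exists x in W, dist y x != dist z x]].

Definition wtr_set (W : {set T}) : bool :=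
  resolving W &&
  [forall w in W, forall x in ~: W,
     [exists w' in W :\ w, dist x w' != dist w w']].

Definition res_wt_ok (r : nat) : bool :=
  (0 < r) && [forall W : {set T}, (#|W| == r) ==> wtr_set W].

Lemma res_wt_ok_ex : exists r, res_wt_ok r.
Proof.
exists #|T|.+1; rewrite /res_wt_ok /=; apply/forallP => W; apply/implyP.
by move/eqP=> HW; have := max_card W; rewrite HW ltnn.
Qed.

Definition res_wt : nat := ex_minn res_wt_ok_ex.

Definition twins (u v : T) : bool :=
  (u != v) && (nbhd u :\ v == nbhd v :\ u).

Definition is_twin (u : T) : bool := [exists v, twins u v].

End Graph.

(* Main.v *)
Require Import Defs.
From mathcomp Require Import all_boot.
From mathcomp Require Import zify.
Set Implicit Arguments. Unset Strict Implicit.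

Section Aux.
Variables (T : finType) (e : rel T).

Lemma walkP k x y :
  reflect (exists p : seq T, [/\ size p = k, path e x p & last x p = y])
          (walk_len e k x y).
Proof.
apply: (iffP existsP) => [[p /andP[Hp /eqP Hl]]|[p [Hs Hp Hl]]].
  by exists p; split => //; rewrite size_tuple.
have Hs' : size p == k by rewrite Hs.
by exists (Tuple Hs') => /=; rewrite Hp Hl eqxx.
Qed.

Lemma walk0 x y : walk_len e 0 x y = (x == y).
Proof.
apply/walkP/eqP => [[[|a p] [Hs _ Hl]]|->] //.
by exists [::].
Qed.

Lemma walk1 x y : walk_len e 1 x y = e x y.
Proof.
apply/walkP/idP => [[[|a [|b p]] [//= _ ]]|H]; first by rewrite andbT => /= H <-.
by exists [:: y]; rewrite /= H.
Qed.

Lemma dist0 x y : 0 < #|T| -> (dist e x y == 0) = (x == y).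
Proof.
rewrite /dist; case: #|T| => [|m] //= _; rewrite walk0.
by case: (x == y).
Qed.

Lemma dist1 x y : 1 < #|T| -> irreflexive e -> (dist e x y == 1) = e x y.
Proof.
move=> H Hirr; rewrite /dist; case: #|T| H => [|[|m]] //= _; rewrite walk0 walk1.
case: (eqVneq x y) => [->|_]; first by rewrite Hirr.
by case: (e x y).
Qed.

Lemma find_le (a : pred nat) s j : j < size s -> a (nth 0 s j) -> find a s <= j.
Proof.
move=> Hj Ha; rewrite leqNgt; apply/negP => /(before_find 0); by rewrite Ha.
Qed.

Lemma twin_dist u v x :
  (forall y, y != v -> e u y -> e v y) -> x != u -> x != v ->
  dist e v x <= dist e u x.
Proof.
move=> Htw Hxu Hxv; rewrite /dist.
case Hh: (has (fun k => walk_len e k u x) (iota 0 #|T|)); last first.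
  by rewrite (hasNfind (negbT Hh)) find_size.
set k := find (fun k => walk_len e k u x) _.
have Hk : k < #|T| by move: Hh; rewrite has_find size_iota.
have := nth_find 0 Hh; rewrite -/k nth_iota // add0n.
case/walkP => p [Hs Hp Hl].
case: p Hs Hp Hl => [|a p] Hs Hp Hl.
  by move: Hxu; rewrite -Hl eqxx.
move: Hp => /= /andP[Hua Hp].
have [Hav | Hav] := eqVneq a v.
  subst a.
  apply: (@leq_trans k.-1); last by rewrite leq_pred.
  apply: find_le; first by rewrite size_iota; apply: leq_ltn_trans Hk; rewrite leq_pred.
  rewrite nth_iota ?add0n; last by apply: leq_ltn_trans Hk; rewrite leq_pred.
  by apply/walkP; exists p; rewrite -Hs /=.
apply: find_le; first by rewrite size_iota.
rewrite nth_iota // add0n; apply/walkP; exists (a :: p); split => //=.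
by rewrite Htw.
Qed.

Lemma twins_nb u v : twins e u v -> forall y, y != v -> e u y -> e v y.
Proof.
case/andP=> _ /eqP H y Hyv Huy.
have : y \in nbhd e u :\ v by rewrite !inE Hyv Huy.
by rewrite H !inE => /andP[].
Qed.

Lemma twins_sym u v : twins e u v -> twins e v u.
Proof. by case/andP => H /eqP H'; rewrite /twins eq_sym H H' eqxx. Qed.

Lemma twin_dist_eq u v x : twins e u v -> x != u -> x != v ->
  dist e u x = dist e v x.
Proof.
move=> H Hu Hv; apply/eqP; rewrite eqn_leq.
by rewrite !twin_dist //; apply: twins_nb => //; rewrite twins_sym.
Qed.

Lemma dist_self_neq y z : 0 < #|T| -> y != z -> dist e y y != dist e z y.
Proof.
move=> Hn Hyz; apply/negP => /eqP H.
have : dist e y y == 0 by rewrite dist0.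
by rewrite H dist0 // eq_sym (negbTE Hyz).
Qed.

End Aux.

Theorem theorem5 (T : finType) (e : rel T) :
  symmetric e -> irreflexive e -> connected_graph e -> 3 <= #|T| ->
  (res_wt e = #|T| <-> exists u : T, is_twin e u).
Proof.
move=> Hsym Hirr _ Hn.
have Hn0 : 0 < #|T| by apply: leq_trans Hn.
have Hn1 : 1 < #|T| by apply: leq_trans Hn.
have okn : res_wt_ok e #|T|.
  rewrite /res_wt_ok Hn0 /=; apply/forallP => W; apply/implyP => /eqP HW.
  have -> : W = [set: T].
    apply/eqP; rewrite eqEcard subsetT /=. rewrite cardsT HW //.
  rewrite /wtr_set; apply/andP; split.
    apply/forallP => y; apply/forallP => z; apply/implyP => Hyz.
    apply/existsP; exists y; rewrite inE /=.
    exact: dist_self_neq.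
  by apply/forallP => w; apply/implyP => _; apply/forallP => x; rewrite !inE.
rewrite /res_wt; case: ex_minnP => m Hm Hmin.
have Hmn := Hmin _ okn.
split => [Hmeq|[u /existsP[v Huv]]]; last first.
  apply/eqP; rewrite eqn_leq Hmn /=; rewrite leqNgt; apply/negP => Hlt.
  move: Hm; rewrite /res_wt_ok => /andP[Hm0 /forallP HW].
  have Huv' := Huv; case/andP: Huv' => Hne _.
  case: (ltngtP m #|T|.-1) => Hc.
  - (* m <= n-2: W avoids u, v *)
    pose A := ~: [set u; v].
    pose W := [set x in take m (enum A)].
    have HcA : #|A| = #|T| - 2.
      rewrite cardsCs setCK cards2 Hne //.
    have HWc : #|W| = m.
      rewrite cardsE.
      have /card_uniqP -> : uniq (take m (enum A)) by apply: take_uniq; apply: enum_uniq.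
      rewrite size_takel // -cardE HcA.
      by move: Hc Hn; clear; lia.
    have HWA : forall x, x \in W -> x != u /\ x != v.
      move=> x; rewrite inE => /mem_take; rewrite mem_enum !inE.
      by case: (x == u); case: (x == v).
    move: (HW W); rewrite HWc eqxx /= /wtr_set => /andP[/forallP Hr _].
    move: (Hr u) => /forallP /(_ v); rewrite Hne /= => /existsP[x /andP[Hx]].
    case: (HWA x Hx) => Hxu Hxv.
    by rewrite (twin_dist_eq Huv) // eqxx.
  - move: Hc Hlt; case: #|T| => [|k] //=; rewrite ltnS => H1 H2.
    by move: (leq_ltn_trans H2 H1); rewrite ltnn.
  -
    pose W := [set~ u].
    move: (HW W); rewrite cardsC1 Hc eqxx /= /wtr_set => /andP[_ /forallP Hw].
    move: (Hw v); rewrite !inE eq_sym Hne /= => /forallP /(_ u).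
    rewrite !inE eqxx /= => /existsP[w /andP[]]; rewrite !inE.
    case/andP => Hwv Hwu.
    by rewrite (twin_dist_eq Huv) // eqxx.
case: (boolP [exists u, is_twin e u]) => [/existsP //|Hno].
exfalso.
have okn1 : res_wt_ok e #|T|.-1.
  rewrite /res_wt_ok; apply/andP; split; first by move: Hn; case: #|T| => [|[|[|k]]].
  apply/forallP => W; apply/implyP => /eqP HW.
  have : #|~: W| == 1.
    move: (cardsC W); rewrite HW => H.
    by move: H Hn0; case: #|T| => [|k] //= ; rewrite -addn1 => /eqP; rewrite eqn_add2l.
  case/cards1P => a Ha.
  have inW : forall x, (x \in W) = (x != a).
    by move=> x; rewrite -[x \in W]negbK -in_setC Ha inE.
  rewrite /wtr_set; apply/andP; split.
    apply/forallP => y; apply/forallP => z; apply/implyP => Hyz.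
    case Hy: (y \in W).
      apply/existsP; exists y; rewrite Hy /=.
      exact: dist_self_neq.
    have Hz : z \in W.
      move: Hy; rewrite !inW => /negbFE /eqP Hya; subst y.
      by rewrite eq_sym.
    apply/existsP; exists z; rewrite Hz /=.
    by rewrite eq_sym dist_self_neq // eq_sym.
  apply/forallP => w; apply/implyP => Hw; apply/forallP => x; apply/implyP.
  rewrite in_setC inW => /negbNE /eqP Hx; subst x.
  apply: contraT; rewrite negb_exists => /forallP Hall.
  have Hwa : w != a by rewrite -inW.
  suff: [exists u, is_twin e u] by rewrite (negbTE Hno).
  apply/existsP; exists a; apply/existsP; exists w.
  rewrite /twins eq_sym Hwa /=; apply/eqP/setP => y; rewrite !inE.
  have [->|Hya] := eqVneq y a; first by rewrite Hirr andbF.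
  have [->|Hyw] := eqVneq y w; first by rewrite Hirr andbF.
  rewrite /=.
  move: (Hall y); rewrite !inE Hyw inW Hya /= negbK => /eqP H.
  by rewrite -(dist1 a y Hn1 Hirr) -(dist1 w y Hn1 Hirr) H.
move: (Hmin _ okn1); rewrite Hmeq.
by move: Hn; case: #|T| => [|k] //= _; rewrite ltnn.
Qed.
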